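(* Let $n>4$. In any sparse ordering $\sigma$ of $U_n$, the position of $v_1$ is $1$ or $2$ and the position of $v_n$ is $n$ or $n-1$. Furthermore, for no $i\in[n-1]$ is $v_i$ immediately followed by $v_{i+1}$ in $\sigma$.
   Context: For $n\ge1$, $U_n$ is the tournament with vertex set $\{v_1,\dots,v_n\}$ and arc set $\{(v_{i+1},v_i): i\in[n-1]\}\cup\{(v_i,v_j): 1\le i<n,\ i+1<j\le n\}$. For an ordering of the vertices, an arc $(x,y)$ is backward if $y$ comes before $x$. An ordering is sparse if every vertex is incident to at most one backward arc. Positions in an ordering are numbered $1,\dots,n$. *)

(* Defs.v *)
From mathcomp Require Import all_boot.
Set Implicit Arguments. Unset Strict Implicit. Unset Printing Implicit Defensive.

(* Vertices of U_n are the ordinals x : 'I_n; the paper's vertex v_k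
   (1 <= k <= n) is the ordinal with value k - 1. *)

(* Arc relation of U_n: (v_{i+1}, v_i) for i in [n-1], and (v_i, v_j) for
   i < n, i + 1 < j <= n.  The shift by one in indexing does not affect it. *)
Definition U_arc (n : nat) (x y : 'I_n) : bool :=
  (val x == (val y).+1) || ((val x).+1 < val y).

(* An ordering is given by its (injective, hence bijective) position map
   pos : 'I_n -> 'I_n; the paper's position p is val (pos x) + 1. *)
Definition is_ordering (n : nat) (pos : 'I_n -> 'I_n) : Prop := injective pos.

Definition backward (n : nat) (pos : 'I_n -> 'I_n) (x y : 'I_n) : bool :=
  U_arc x y && (pos y < pos x).

Definition sparse (n : nat) (pos : 'I_n -> 'I_n) : Prop :=
  forall v : 'I_n,
    #|[set e : 'I_n * 'I_n | backward pos e.1 e.2 && ((e.1 == v) || (e.2 == v))]| <= 1.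

(* Main.v *)
Require Import Defs.
From mathcomp Require Import all_boot zify.
Definition BW (P : nat -> nat) v a : Prop :=
  (a = v.+1 /\ P v < P a) \/ (v = a.+1 /\ P a < P v) \/
  (v.+1 < a /\ P a < P v) \/ (a.+1 < v /\ P v < P a).

Section S.
Variables (n : nat) (P : nat -> nat).
Hypothesis n4 : 4 < n.
Hypothesis Pr : forall k, k < n -> P k < n.
Hypothesis Pi : forall k l, k < n -> l < n -> P k = P l -> k = l.
Hypothesis Ps : forall q, q < n -> exists2 k, k < n & P k = q.
Hypothesis Hs : forall v a b, v < n -> a < n -> b < n -> BW P v a -> BW P v b -> a = b.

Lemma claim3 i : i.+1 < n -> P i.+1 <> (P i).+1.
Proof.
move=> Hi E.
have A := Hs i i.+1.
have B := Hs i.+1 i.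
rewrite /BW in A B.
case: (ltnP (i.+2) n) => Hi2.
  have C := Pi i i.+2. have D := Pi i.+1 i.+2.
  have := A i.+2; have := B i.+2. lia.
have C := Pi (i.-1) i. have D := Pi i.-1 i.+1.
have := A i.-1; have := B i.-1. lia.
Qed.

Ltac bw := unfold BW; lia.
Lemma Pne k l : k < n -> l < n -> k <> l -> P k <> P l.
Proof. by move=> ? ? H E; apply: H; apply: Pi. Qed.

Lemma claim1 : P 0 <= 1.
Proof.
rewrite leqNgt; apply/negP => H0.
have [a Ha Pa] := Ps 0 ltac:(lia).
have [b Hb Pb] := Ps 1 ltac:(lia).
have [w Hw [w1 Hpw]] : exists2 w, w < n & (1 < w /\ ((P 1 = 0 /\ P w = 1) \/ (P 1 = 1 /\ P w = 0))).
  have a0 : a <> 0 by move=> E; subst; lia.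
  have b0 : b <> 0 by move=> E; subst; lia.
  have ab : a <> b by move=> E; subst; lia.
  have [Ea|a1] : a = 1 \/ 1 < a by lia.
    subst a. have [E|b1] : b = 1 \/ 1 < b by lia. by subst; lia.
    by exists b => //; lia.
  have [Eb|b1] : b = 1 \/ 1 < b by lia.
    subst b. by exists a => //; lia.
  by case: ab; apply: (Hs 0 a b); bw.
have P1 := Pr 1 ltac:(lia). have Pw := Pr w Hw.
case: (w =P 2) => [Ew|Nw].
  subst w.
  have q1 := Pne 3 1 ltac:(lia) ltac:(lia) ltac:(lia).
  have q2 := Pne 3 2 ltac:(lia) ltac:(lia) ltac:(lia).
  case: (ltnP (P 1) (P 2)) => h.
    suff: 1 = 0 by lia. apply: (Hs 2 1 0); bw.
  suff: 3 = 0 by lia. apply: (Hs 2 3 0); bw.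
have q1 := Pne 2 1 ltac:(lia) ltac:(lia) ltac:(lia).
have q2 := Pne 2 w ltac:(lia) ltac:(lia) ltac:(lia).
case: (ltnP (P w) (P 1)) => h.
  suff: 2 = w by lia. apply: (Hs 1 2 w); bw.
case: (w =P 3) => [Ew|N3].
  subst w.
  have q3 := Pne 4 1 ltac:(lia) ltac:(lia) ltac:(lia).
  have q4 := Pne 4 3 ltac:(lia) ltac:(lia) ltac:(lia).
  suff: 4 = 0 by lia. apply: (Hs 3 4 0); bw.
suff: 2 = 0 by lia. apply: (Hs w 2 0); bw.
Qed.

Lemma claim2 : n.-2 <= P n.-1.
Proof.
rewrite leqNgt; apply/negP => H0.
have [a Ha Pa] := Ps n.-1 ltac:(lia).
have [b Hb Pb] := Ps n.-2 ltac:(lia).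
have [w Hw [w1 Hpw]] : exists2 w, w < n & (w < n.-2 /\ ((P n.-2 = n.-1 /\ P w = n.-2) \/ (P n.-2 = n.-2 /\ P w = n.-1))).
  have a0 : a <> n.-1 by move=> E; subst; lia.
  have b0 : b <> n.-1 by move=> E; subst; lia.
  have ab : a <> b by move=> E; subst; lia.
  have [Ea|a1] : a = n.-2 \/ a < n.-2 by lia.
    subst a. have [E|b1] : b = n.-2 \/ b < n.-2 by lia. by subst; lia.
    by exists b => //; lia.
  have [Eb|b1] : b = n.-2 \/ b < n.-2 by lia.
    subst b. by exists a => //; lia.
  by case: ab; apply: (Hs n.-1 a b); bw.
have P1 := Pr n.-2 ltac:(lia). have Pw := Pr w Hw.
case: (w =P (n-3)) => [Ew|Nw].
  subst w.
  have R4 := Pr (n-4) ltac:(lia).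
  have q1 := Pne (n-4) n.-2 ltac:(lia) ltac:(lia) ltac:(lia).
  have q2 := Pne (n-4) (n-3) ltac:(lia) ltac:(lia) ltac:(lia).
  case: (ltnP (P (n-3)) (P n.-2)) => h.
    suff: n.-2 = n.-1 by lia. apply: (Hs (n-3) n.-2 n.-1); bw.
  suff: (n-4) = n.-1 by lia. apply: (Hs (n-3) (n-4) n.-1); bw.
have R3 := Pr (n-3) ltac:(lia).
have q1 := Pne (n-3) n.-2 ltac:(lia) ltac:(lia) ltac:(lia).
have q2 := Pne (n-3) w ltac:(lia) ltac:(lia) ltac:(lia).
case: (ltnP (P n.-2) (P w)) => h.
  suff: (n-3) = w by lia. apply: (Hs n.-2 (n-3) w); bw.
case: (w =P (n-4)) => [Ew|N3].
  subst w.
  have R5 := Pr (n-5) ltac:(lia).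
  have q3 := Pne (n-5) n.-2 ltac:(lia) ltac:(lia) ltac:(lia).
  have q4 := Pne (n-5) (n-4) ltac:(lia) ltac:(lia) ltac:(lia).
  suff: (n-5) = n.-1 by lia. apply: (Hs (n-4) (n-5) n.-1); bw.
suff: (n-3) = n.-1 by lia. apply: (Hs w (n-3) n.-1); bw.
Qed.
End S.

Lemma sparse_uniq n (pos : 'I_n -> 'I_n) (H : sparse pos) (v a b : 'I_n) :
  (backward pos v a || backward pos a v) -> (backward pos v b || backward pos b v) -> a = b.
Proof.
move: (H v) => /card_le1_eqP E ha hb.
case/orP: ha => ha; case/orP: hb => hb.
- by have := E (v, a) (v, b); rewrite !inE /= ha hb !eqxx ?orbT => /(_ isT isT) [].
- by have := E (v, a) (b, v); rewrite !inE /= ha hb !eqxx ?orbT => /(_ isT isT) [] -> ->.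
- by have := E (a, v) (v, b); rewrite !inE /= ha hb !eqxx ?orbT => /(_ isT isT) [] -> ->.
- by have := E (a, v) (b, v); rewrite !inE /= ha hb !eqxx ?orbT => /(_ isT isT) [].
Qed.

Theorem mainTheorem11 (n : nat) (pos : 'I_n -> 'I_n) :
  4 < n -> is_ordering pos -> sparse pos ->
  (* v_1 is at position 1 or 2 *)
  (forall x : 'I_n, val x = 0 -> val (pos x) <= 1) /\
  (* v_n is at position n or n-1 *)
  (forall x : 'I_n, val x = n.-1 -> n.-2 <= val (pos x)) /\
  (* no v_i is immediately followed by v_{i+1} *)
  (forall x y : 'I_n, val y = (val x).+1 -> val (pos y) <> (val (pos x)).+1).
Proof.
case: n pos => [|m] pos // n4 inj sp.
have {}inj : injective pos := inj.
pose P := fun k => nat_of_ord (pos (inord k)).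
have PE : forall x : 'I_m.+1, P x = val (pos x) by move=> x; rewrite /P inord_val.
have Pr : forall k, k < m.+1 -> P k < m.+1 by move=> k _; exact: ltn_ord.
have Pi : forall k l, k < m.+1 -> l < m.+1 -> P k = P l -> k = l.
  move=> k l hk hl E. have := congr1 (@nat_of_ord _) (inj _ _ (val_inj E)). by rewrite !inordK.
have Ps : forall q, q < m.+1 -> exists2 k, k < m.+1 & P k = q.
  move=> q hq. exists (val (invF inj (inord q))); first exact: ltn_ord.
  by rewrite PE f_invF /= inordK.
have Hs : forall v a b, v < m.+1 -> a < m.+1 -> b < m.+1 -> BW P v a -> BW P v b -> a = b.
  move=> v a b hv ha hb A B.
  have := @sparse_uniq _ _ sp (inord v) (inord a) (inord b).
  rewrite /backward /U_arc /= (inordK hv) (inordK ha) (inordK hb) => H.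
  have: inord a = inord b :> 'I_m.+1.
    by apply: H; rewrite /BW /P in A B; lia.
  by move/(congr1 (@nat_of_ord _)); rewrite !inordK.
split; last split.
- move=> x hx; rewrite -PE hx. exact: (@claim1 m.+1 P n4 Pr Pi Ps Hs).
- by move=> x hx; rewrite -PE hx; exact: (@claim2 m.+1 P n4 Pr Pi Ps Hs).
- move=> x y hy; rewrite -!PE hy; apply: (@claim3 m.+1 P n4 Pi Hs (val x)); rewrite -hy; exact: ltn_ord.
Qed.
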